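(* Let $(\mathfrak{A},\mathfrak{A}_0)$ be a *-semisimple CQ*-algebra as in the context, let $X\in\mathfrak{A}$ be normal, $\varphi\in\mathcal{P}_{\mathfrak{A}_0}(\mathfrak{A})$ and $\alpha\in\mathbb{C}$. Then $\varphi$ is a generalized eigenvector of $X$ with generalized eigenvalue $\alpha$ if and only if $\varphi$ is a generalized eigenvector of $X^*$ with generalized eigenvalue $\overline{\alpha}$.
   Context: Let $\mathfrak{A}_0$ be a unital C*-algebra with C*-norm $\|\cdot\|_0$ and unit $I$, and $\|\cdot\|$ another norm on $\mathfrak{A}_0$ with $\|A\|\le\|A\|_0$, $\|AB\|\le\|A\|\,\|B\|_0$, $\|A^*\|=\|A\|$. $\mathfrak{A}$ is the $\|\cdot\|$-completion of $\mathfrak{A}_0$, with $XA,AX,X^*$ ($X\in\mathfrak{A},A\in\mathfrak{A}_0$) defined as $\|\cdot\|$-limits of $A_nA$, $AA_n$, $A_n^*$ for $A_n\in\mathfrak{A}_0$, $A_n\to X$. $\mathcal{P}_{\mathfrak{A}_0}(\mathfrak{A})$ is the set of sesquilinear forms $\varphi$ on $\mathfrak{A}\times\mathfrak{A}$ with $\varphi(X,X)\ge0$, $\varphi(XA,B)=\varphi(A,X^*B)$ for $X\in\mathfrak{A}$, $A,B\in\mathfrak{A}_0$, and $|\varphi(X,Y)|\le\gamma\|X\|\|Y\|$ for some $\gamma>0$; $\mathcal{S}_{\mathfrak{A}_0}(\mathfrak{A})$ is the subset with $\gamma\le1$. *-semisimple: for every $X\ne0$ there is $\varphi\in\mathcal{S}_{\mathfrak{A}_0}(\mathfrak{A})$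 with $\varphi(X,X)>0$. $X\in\mathfrak{A}$ is normal if $\varphi(XA,XA)=\varphi(X^*A,X^*A)$ for all $\varphi\in\mathcal{P}_{\mathfrak{A}_0}(\mathfrak{A})$, $A\in\mathfrak{A}_0$. A nonzero $\varphi\in\mathcal{P}_{\mathfrak{A}_0}(\mathfrak{A})$ is a generalized eigenvector of $Z\in\mathfrak{A}$ with generalized eigenvalue $\beta\in\mathbb{C}$ if there exists $A\in\mathfrak{A}_0$ with $\varphi(A,A)>0$ and $\varphi(ZA-\beta A,B)=0$ for all $B\in\mathfrak{A}_0$. *)

(* Defs.v *)
From HB Require Import structures.
From mathcomp Require Import all_boot all_order all_algebra.
From mathcomp Require Import complex.
From mathcomp Require Import reals.
Set Implicit Arguments. Unset Strict Implicit. Unset Printing Implicit Defensive.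
Import Order.TTheory GRing.Theory Num.Theory.
Local Open Scope ring_scope.

Section CQstarDefs.
Variable R : realType.
Local Notation C := R[i].

Definition seq_cvg_to {V : zmodType} (nV : V -> R) (u : nat -> V) (x : V) :=
  forall e : R, 0 < e -> exists N : nat, forall n : nat, (N <= n)%N -> nV (u n - x) < e.

Definition seq_cauchy {V : zmodType} (nV : V -> R) (u : nat -> V) :=
  forall e : R, 0 < e -> exists N : nat,
    forall m n : nat, (N <= m)%N -> (N <= n)%N -> nV (u m - u n) < e.

Definition is_cnorm {V : lmodType C} (nV : V -> R) :=
  [/\ forall x, 0 <= nV x,
      forall x, nV x = 0 -> x = 0,
      forall (c : C) x, nV (c *: x) = Normc.normc c * nV x &
      forall x y, nV (x + y) <= nV x + nV y].

(* The data of a CQ*-algebra (A, A0) as in the paper: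
   - A0 is a unital C*-algebra with involution star0 and C*-norm n0;
   - n is another norm on A0 with n a <= n0 a, n (a b) <= n a * n0 b,
     n (a^* ) = n a;
   - A (with norm nA) is the n-completion of A0, iota : A0 -> A the canonical
     (linear, isometric, dense) embedding, A complete;
   - rmul X a = "X a", lmul a X = "a X", starA X = "X^*" for X in A, a in A0,
     defined as nA-limits of iota (a_k a), iota (a a_k), iota (a_k^* )
     for any sequence a_k in A0 with iota a_k -> X. *)
Record CQstar (A0 : algType C) (A : lmodType C) := {
  star0 : A0 -> A0;
  n0 : A0 -> R;
  n : A0 -> R;
  nA : A -> R;
  iota : A0 -> A;
  rmul : A -> A0 -> A;
  lmul : A0 -> A -> A;
  starA : A -> A;
  star0D : forall a b, star0 (a + b) = star0 a + star0 b;
  star0Z : forall (c : C) a, star0 (c *: a) = conjc c *: star0 a;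
  star0M : forall a b, star0 (a * b) = star0 b * star0 a;
  star0K : forall a, star0 (star0 a) = a;
  n0_norm : is_cnorm n0;
  n0M : forall a b, n0 (a * b) <= n0 a * n0 b;
  n0_Cstar : forall a, n0 (star0 a * a) = n0 a ^+ 2;
  n0_complete : forall u : nat -> A0, seq_cauchy n0 u -> exists x, seq_cvg_to n0 u x;
  n_norm : is_cnorm n;
  n_le_n0 : forall a, n a <= n0 a;
  nM : forall a b, n (a * b) <= n a * n0 b;
  n_star : forall a, n (star0 a) = n a;
  nA_norm : is_cnorm nA;
  iota_linear : forall (c : C) a b, iota (c *: a + b) = c *: iota a + iota b;
  iota_isometric : forall a, nA (iota a) = n a;
  iota_dense : forall (X : A) (e : R), 0 < e -> exists a, nA (X - iota a) < e;
  nA_complete : forall u : nat -> A, seq_cauchy nA u -> exists X, seq_cvg_to nA u X;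
  ops_limit : forall (u : nat -> A0) (X : A), seq_cvg_to nA (fun k => iota (u k)) X ->
    [/\ forall a, seq_cvg_to nA (fun k => iota (u k * a)) (rmul X a),
        forall a, seq_cvg_to nA (fun k => iota (a * u k)) (lmul a X) &
        seq_cvg_to nA (fun k => iota (star0 (u k))) (starA X)]
}.

Variables (A0 : algType C) (A : lmodType C) (Q : CQstar A0 A).

Definition sesquilinear (phi : A -> A -> C) :=
  (forall (c : C) X Y Z, phi (c *: X + Y) Z = c * phi X Z + phi Y Z) /\
  (forall (c : C) X Y Z, phi X (c *: Y + Z) = conjc c * phi X Y + phi X Z).

Definition PA0_bound (phi : A -> A -> C) (gamma : R) :=
  [/\ sesquilinear phi,
      forall X, 0 <= phi X X,
      forall X a b, phi (rmul Q X a) (iota Q b) = phi (iota Q a) (rmul Q (starA Q X) b) &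
      forall X Y, Normc.normc (phi X Y) <= gamma * nA Q X * nA Q Y].

Definition PA0 (phi : A -> A -> C) := exists2 gamma : R, 0 < gamma & PA0_bound phi gamma.

Definition SA0 (phi : A -> A -> C) :=
  exists gamma : R, [/\ 0 < gamma, gamma <= 1 & PA0_bound phi gamma].

Definition star_semisimple :=
  forall X : A, X <> 0 -> exists2 phi, SA0 phi & 0 < phi X X.

Definition normal_elt (X : A) :=
  forall phi, PA0 phi -> forall a,
    phi (rmul Q X a) (rmul Q X a) = phi (rmul Q (starA Q X) a) (rmul Q (starA Q X) a).

Definition gen_eigenvector (phi : A -> A -> C) (Z : A) (beta : C) :=
  [/\ PA0 phi, phi <> (fun _ _ => 0) &
      exists a : A0, 0 < phi (iota Q a) (iota Q a) /\
        forall b : A0, phi (rmul Q Z a - beta *: iota Q a) (iota Q b) = 0].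

End CQstarDefs.

(* Main.v *)
Require Import Defs.
From HB Require Import structures.
From mathcomp Require Import all_boot all_order all_algebra.
From mathcomp Require Import complex.
From mathcomp Require Import reals.
From mathcomp Require Import ring lra.
Import Order.TTheory GRing.Theory Num.Theory.
Local Open Scope ring_scope.
Local Open Scope complex_scope.
Set Implicit Arguments.
Lemma herm_aux (R : realType) (p q r1 r2 : R[i]) :
  0 <= r1 -> 0 <= r2 ->
  (forall t : R[i], 0 <= t * (conjc t * r1 + q) + (conjc t * p + r2)) ->
  q = conjc p.
Proof.
case: p => p1 p2; case: q => q1 q2; case: r1 => a1 a2; case: r2 => b1 b2.
move=> h1 h2 h.
have h3 := h 1. have h4 := h 'i.
move: h1 h2 h3 h4; rewrite !lecE /=.
move=> /andP[/eqP ? _] /andP[/eqP ? _] /andP[/eqP e1 _] /andP[/eqP e2 _].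
apply/eqP; rewrite eq_complex /=; apply/andP; split; apply/eqP; lra.
Qed.

Lemma quad_aux (R : realType) (u rho : R) : 0 <= rho ->
  (forall s : R, 0 <= s * u + s ^+ 2 * rho) -> u = 0.
Proof.
move=> hr h.
have hp : 0 < rho + 1 by lra.
have [k hu] : exists k, u = k * (rho + 1).
  by exists (u / (rho + 1)); rewrite mulrVK // unitfE gt_eqF.
have H := h (- k). rewrite hu in H.
have hk : k = 0 by nra.
by rewrite hu hk mul0r.
Qed.

Lemma key_aux (R : realType) (p q r : R[i]) :
  0 <= r ->
  (forall t : R[i], 0 <= t * (conjc t * r + q) + (conjc t * p + 0)) ->
  p = 0.
Proof.
case: p => p1 p2; case: q => q1 q2; case: r => a1 a2.
move=> h1 h.
have hs : forall s : R, 0 <= s * (p1 + q1) + s ^+ 2 * a1 /\ 0 <= s * (p2 - q2) + s ^+ 2 * a1.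
  move=> s; have h3 := h (s +i* 0). have h4 := h (0 +i* s).
  move: h1 h3 h4; rewrite !lecE /= => /andP[/eqP ha2 ?] /andP[_ e1] /andP[_ e2].
  rewrite ha2 in e1 e2.
  move: e1 e2; move=> e1 e2. split.
    by apply: (le_trans e1); rewrite le_eqVlt; apply/orP; left; apply/eqP; ring.
  by apply: (le_trans e2); rewrite le_eqVlt; apply/orP; left; apply/eqP; ring.
have hi : p2 + q2 = 0.
  have h3 := h 1. move: h1 h3; rewrite !lecE /= => /andP[/eqP ? ?] /andP[/eqP e1 _]; lra.
have hj : q1 - p1 = 0.
  have h3 := h 'i. move: h1 h3; rewrite !lecE /= => /andP[/eqP ? ?] /andP[/eqP e1 _]; lra.
have ha : 0 <= a1 by move: h1; rewrite lecE => /andP[_ ->].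
have e1 := @quad_aux _ _ _ ha (fun s => proj1 (hs s)).
have e2 := @quad_aux _ _ _ ha (fun s => proj2 (hs s)).
apply/eqP; rewrite eq_complex /=; apply/andP; split; apply/eqP; lra.
Qed.

Lemma normc_ge0' (R : realType) (x : R[i]) : 0 <= Normc.normc x.
Proof. by case: x => a b; rewrite /Normc.normc; apply: sqrtr_ge0. Qed.

Lemma expand_phi (R : realType) (A0 : algType R[i]) (A : lmodType R[i])
  (Q : CQstar A0 A) (phi : A -> A -> R[i]) (g : R) (hb : PA0_bound Q phi g)
  (t : R[i]) (Z Y : A) :
  phi (t *: Z + Y) (t *: Z + Y) =
  t * (conjc t * phi Z Z + phi Z Y) + (conjc t * phi Y Z + phi Y Y).
Proof. by case: hb => [[hl hr] _ _ _]; rewrite hl !hr. Qed.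

Lemma herm_phi (R : realType) (A0 : algType R[i]) (A : lmodType R[i])
  (Q : CQstar A0 A) (phi : A -> A -> R[i]) (g : R) (hb : PA0_bound Q phi g)
  (Y Z : A) : phi Z Y = conjc (phi Y Z).
Proof.
have hb' := hb; case: hb' => _ hpos _ _.
apply: herm_aux (hpos Z) (hpos Y) _ => t.
by rewrite -(expand_phi hb).
Qed.

Lemma null_phi (R : realType) (A0 : algType R[i]) (A : lmodType R[i])
  (Q : CQstar A0 A) (phi : A -> A -> R[i]) (g : R) (hb : PA0_bound Q phi g)
  (W : A) : phi W W = 0 -> forall Z, phi W Z = 0.
Proof.
move=> h0 Z.
have hb' := hb; case: hb' => _ hpos _ _.
apply: (@key_aux _ _ (phi Z W) (phi Z Z) (hpos Z)) => t.
by have := hpos (t *: Z + W); rewrite (expand_phi hb) h0.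
Qed.

Lemma ext_phi (R : realType) (A0 : algType R[i]) (A : lmodType R[i])
  (Q : CQstar A0 A) (phi : A -> A -> R[i]) (g : R) (hg : 0 < g)
  (hb : PA0_bound Q phi g)
  (Y : A) : (forall b, phi Y (Defs.iota Q b) = 0) -> forall Z, phi Y Z = 0.
Proof.
move=> h Z.
have hb' := hb; case: hb' => [[hl hr]] hpos _ hbd.
have [n0 _ _ _] := nA_norm Q.
set c := g * nA Q Y.
have hc : 0 <= c by rewrite /c mulr_ge0 // ltW.
have hbound : forall b, Normc.normc (phi Y Z) <= c * nA Q (Z - Defs.iota Q b).
  move=> b.
  have -> : phi Y Z = phi Y (1 *: (Z - Defs.iota Q b) + Defs.iota Q b) by rewrite scale1r subrK.
  by rewrite hr h addr0 conjc1 mul1r; apply: hbd.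
apply: Normc.eq0_normc.
set m := Normc.normc _.
have hm : 0 <= m by apply: normc_ge0'.
case: (ltrgt0P m) => [mpos|mneg|//]; last by move: hm; rewrite leNgt mneg.
have he : 0 < m / (c + 1) by rewrite divr_gt0 //; lra.
have [b hbd'] := Defs.iota_dense Q Z he.
move: hbd'; rewrite ltr_pdivlMr; last by lra.
have := hbound b; have := n0 (Z - Defs.iota Q b).
move=> d0 hmb hd.
rewrite -/m in hmb; exfalso; nra.
Qed.

Lemma core_ident (R : realType) (A0 : algType R[i]) (A : lmodType R[i])
  (Q : CQstar A0 A) (phi : A -> A -> R[i]) (g : R) (hb : PA0_bound Q phi g)
  (X : A) (a : A0) (alpha : R[i])
  (hn : phi (rmul Q X a) (rmul Q X a) =
        phi (rmul Q (starA Q X) a) (rmul Q (starA Q X) a)) :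
  phi (rmul Q X a - alpha *: Defs.iota Q a) (rmul Q X a - alpha *: Defs.iota Q a) =
  phi (rmul Q (starA Q X) a - conjc alpha *: Defs.iota Q a)
      (rmul Q (starA Q X) a - conjc alpha *: Defs.iota Q a).
Proof.
have hb' := hb; case: hb' => _ _ hax _.
rewrite -!scaleNr ![_ + (- _ *: _)]addrC !(expand_phi hb) hn.
rewrite (herm_phi hb (Defs.iota Q a) (rmul Q (starA Q X) a)) (herm_phi hb (rmul Q X a) (Defs.iota Q a)).
rewrite -hax.
rewrite !rmorphN /= conjcK.
ring.
Qed.

Unset Implicit Arguments.

Theorem proposition4p15 (R : realType) (A0 : algType R[i]) (A : lmodType R[i])
  (Q : CQstar A0 A) (hss : star_semisimple Q)
  (X : A) (hX : normal_elt Q X)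
  (phi : A -> A -> R[i]) (hphi : PA0 Q phi) (alpha : R[i]) :
  gen_eigenvector Q phi X alpha <-> gen_eigenvector Q phi (starA Q X) (conjc alpha).
Proof.
have [g hg hb] := hphi.
split.
- case=> hP hnz [a [ha hY]]; split => //; exists a; split => //.
  move=> b; apply: (null_phi hb).
  rewrite -(@core_ident _ _ _ _ _ _ hb X a alpha (hX phi hphi a)).
  by apply: (ext_phi hg hb).
- case=> hP hnz [a [ha hW]]; split => //; exists a; split => //.
  move=> b; apply: (null_phi hb).
  rewrite (@core_ident _ _ _ _ _ _ hb X a alpha (hX phi hphi a)).
  by apply: (ext_phi hg hb).
Qed.
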